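(* Let $p \geq 5$ be a prime and let $G$ be a group of order $p^7$ such that $\gamma_2(G)$ is an abelian subgroup of order $p^5$ with $d(\gamma_2(G)) = 4$. Then: (i) the nilpotency class of $G$ is at least $5$; (ii) if $p \geq 7$, then the nilpotency class of $G$ is exactly $5$.
   Context: $\gamma_2(G)$ denotes the commutator subgroup of $G$ and $d(X)$ the minimal number of generators of a finite group $X$. *)

(* Defs.v *)
From mathcomp Require Import all_boot all_fingroup all_solvable.
Set Implicit Arguments. Unset Strict Implicit. Unset Printing Implicit Defensive.
Local Open Scope group_scope.

(* d(A): the minimal number of generators of a group A, i.e. the least
   cardinality of a subset S with <<S>> = A.  (A itself generates A when A
   is a group, so the arg min is taken over a non-empty range.) *)
Definition min_gen_set (gT : finGroupType) (A : {set gT}) : {set gT} :=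
  [arg min_(S < A | <<S>> == A) #|S|].

Definition dgen (gT : finGroupType) (A : {set gT}) : nat := #|min_gen_set A|.

(* Main.v *)
Require Import Defs.
From mathcomp Require Import all_boot all_fingroup all_solvable ssralg zify.
Set Implicit Arguments. Unset Strict Implicit. Unset Printing Implicit Defensive.
Import GRing.Theory.
Local Open Scope group_scope.

Lemma hockey (n i : nat) : (\sum_(0 <= k < n) 'C(k, i) = 'C(n, i.+1))%N.
Proof.
elim: n => [|n IH]; first by rewrite big_nil.
by rewrite big_nat_recr //= IH binS addnC.
Qed.

Section HallSec.
Variables (gT : finGroupType) (G : {group gT}) (abM : abelian G^`(1)).
Local Notation V := (FiniteModule.fmod_of abM).
Import FiniteModule.

Definition X (g : gT) (u : V) : V := (actr u g - u)%R.

Lemma nMG : G \subset 'N(G^`(1)).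
Proof. exact: der_norm. Qed.

Lemma cM x y : x \in G^`(1) -> y \in G^`(1) -> commute x y.
Proof. by move=> Mx My; apply: (centsP abM). Qed.

Lemma actrM (u : V) g h : g \in G -> h \in G -> actr (actr u g) h = actr u (g * h).
Proof.
move=> Gg Gh; apply: val_inj.
rewrite !fmvalJ ?conjgM // ?groupM //; by apply: (subsetP nMG).
Qed.

Lemma actrD g (u : V) : actr u g = (u + X g u)%R.
Proof. by rewrite /X addrC subrK. Qed.

Lemma valX g (u : V) : g \in G -> val (X g u) = [~ val u, g].
Proof.
move=> Gg; rewrite /X fmvalA fmvalN fmvalJ ?(subsetP nMG) // commgEl.
apply: cM; first by rewrite memJ_norm ?fmodP ?(subsetP nMG).
by rewrite groupV fmodP.
Qed.

Lemma iterXL g (u : V) i : g \in G -> val (iter i (X g) u) \in 'L_i.+2(G).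
Proof.
move=> Gg; elim: i => [|i IH]; first exact: fmodP.
by rewrite iterS valX // lcnSn mem_commg.
Qed.

Lemma binexp g (u : V) k n : g \in G -> k < n ->
  actr u (g ^+ k) = (\sum_(0 <= i < n) iter i (X g) u *+ 'C(k, i))%R.
Proof.
move=> Gg; elim: k n => [|k IH] n ltkn.
  case: n ltkn => // n _; rewrite big_nat_recl //= big1 ?addr0.
    rewrite /= mulr1n; apply: val_inj; rewrite fmvalJ ?conjg1 // group1.
    by [].
  by move=> i _; rewrite bin0n mulr0n.
case: n ltkn => // n ltkn.
rewrite expgSr -actrM ?groupX // (IH n.+1) ?(ltn_trans _ ltkn) //.
rewrite actr_sum.
under eq_bigr => i _ do rewrite actZr actrD mulrnDl.
rewrite big_split /=.
rewrite [X in (X + _ = _)%R]big_nat_recl // [X in (_ + X = _)%R]big_nat_recr //=.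
rewrite [X in (_ = X)%R]big_nat_recl //=.
rewrite (@bin_small k n) // mulr0n addr0 !bin0.
under [X in (_ = _ + X)%R]eq_bigr => i _ do rewrite binS mulrnDr.
rewrite big_split /= addrA.
done.
Qed.

Lemma sumconj (p : nat) g (u : V) : prime p -> g \in G ->
  iter p.-1 (X g) u = 0%R -> (forall i, 0 < i -> (iter i (X g) u *+ p = 0)%R) ->
  (\sum_(0 <= k < p) actr u (g ^+ k) = u *+ p)%R.
Proof.
move=> pr_p Gg Hz Ht; have p_gt1 := prime_gt1 pr_p.
rewrite (eq_big_nat _ _ (F2 := fun k => \sum_(0 <= i < p) iter i (X g) u *+ 'C(k, i))%R); last first.
  by move=> k /andP[_ ltkp]; rewrite (binexp _ _ ltkp).
rewrite exchange_big_nat /=.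
under eq_bigr => i _ do rewrite sumrMnr hockey.
case: p pr_p p_gt1 Hz Ht => // p pr_p p_gt1 /= Hz Ht.
rewrite big_nat_recl //= bin1 big1 ?addr0 //.
move=> i _; rewrite -iterS.
have [lt|ge] := ltnP i.+2 p.+1.
  have /dvdnP[q ->] : p.+1 %| 'C(p.+1, i.+2) by apply: prime_dvd_bin => //; apply/andP; split.
  by rewrite mulnC mulrnA (Ht i.+1) ?mul0rn.
case: (ltnP i.+2 p.+2) => [lt2|ge2].
  have -> : i.+1 = p by apply/eqP; rewrite eqn_leq; apply/andP; split.
  by rewrite Hz mul0rn.
by rewrite bin_small // mulr0n.
Qed.

Lemma powM g d n : g \in G -> d \in G^`(1) ->
  (g * d) ^+ n = g ^+ n * val (\sum_(0 <= k < n) actr (fmod abM d) (g ^+ k))%R.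
Proof.
move=> Gg Md; elim: n => [|n IH]; first by rewrite big_nil fmval0 !expg0 mulg1.
rewrite big_nat_recl // expgSr IH.
have -> : (\sum_(0 <= i < n) actr (fmod abM d) (g ^+ i.+1) =
           actr (\sum_(0 <= i < n) actr (fmod abM d) (g ^+ i)) g)%R.
  rewrite actr_sum; apply: eq_bigr => i _.
  by rewrite actrM ?groupX // expgSr.
have -> : actr (fmod abM d) (g ^+ 0) = fmod abM d.
  by apply: val_inj; rewrite fmvalJ ?conjg1 // group1.
rewrite fmvalA fmvalJ ?(subsetP nMG) // fmodK //.
rewrite expgSr -!mulgA; congr (_ * _).
rewrite mulgA (conjgC _ g) -mulgA; congr (_ * _).
apply: cM => //; rewrite memJ_norm ?fmodP ?(subsetP nMG) //.
Qed.

Lemma hall (p : nat) g h : prime p -> g \in G -> h \in G -> 'L_p.+1(G) = 1 ->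
  (forall t, t \in 'L_3(G) -> t ^+ p = 1) -> [~ g ^+ p, h] = [~ g, h] ^+ p.
Proof.
move=> pr_p Gg Gh HL H3; have p_gt0 := prime_gt0 pr_p.
have Md : [~ g, h] \in G^`(1) by rewrite derg1 mem_commg.
set d := [~ g, h] in Md *.
have Hz : iter p.-1 (X g) (fmod abM d) = 0%R.
  apply: val_inj; rewrite fmval0; apply/set1P.
  by have := iterXL (fmod abM d) p.-1 Gg; rewrite prednK // HL.
have Ht : forall i, 0 < i -> (iter i (X g) (fmod abM d) *+ p = 0)%R.
  move=> i i_gt0; apply: val_inj; rewrite fmvalZ fmval0; apply: H3.
  by apply: subsetP (iterXL _ i Gg); apply: lcn_sub_leq.
have := sumconj pr_p Gg Hz Ht; move/(congr1 val); rewrite fmvalZ fmodK // => HS.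
rewrite commgEl conjXg.
have -> : g ^ h = g * d by rewrite /d commgEl mulKVg.
by rewrite powM // HS mulKg.
Qed.

End HallSec.
Section Main.
Variables (gT : finGroupType) (p : nat) (G : {group gT}).
Hypotheses (pr_p : prime p) (p5 : 5 <= p) (oG : #|G| = (p ^ 7)%N)
  (abM : abelian G^`(1)) (oM : #|G^`(1)| = (p ^ 5)%N) (rM : 'r(G^`(1)) = 4).

Let p_gt1 : 1 < p. Proof. exact: prime_gt1. Qed.
Let p_gt0 : 0 < p. Proof. exact: prime_gt0. Qed.

Lemma pG : p.-group G.
Proof. by rewrite /pgroup oG pnatX pnat_id. Qed.

Lemma nilG : nilpotent G. Proof. exact: pgroup_nil pG. Qed.
Lemma sMG : G^`(1) \subset G. Proof. exact: der_sub. Qed.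
Lemma nsMG : G^`(1) <| G. Proof. exact: der_normal. Qed.

Lemma cardS (H : {group gT}) : H \subset G -> #|H| = (p ^ logn p #|H|)%N.
Proof. by move=> sHG; apply: card_pgroup (pgroupS sHG pG). Qed.

Lemma lt_e (H K : {group gT}) : K \subset G -> H \proper K ->
  logn p #|H| < logn p #|K|.
Proof.
move=> sKG prHK; have sHG := subset_trans (proper_sub prHK) sKG.
by rewrite -(ltn_exp2l _ _ p_gt1) -(cardS sHG) -(cardS sKG) proper_card.
Qed.

Lemma eq_e (H K : {group gT}) : K \subset G -> H \subset K ->
  logn p #|K| <= logn p #|H| -> H :=: K.
Proof.
move=> sKG sHK le; apply/eqP; rewrite eqEcard sHK /=.
have sHG := subset_trans sHK sKG.
by rewrite (cardS sHG) (cardS sKG) leq_exp2l.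
Qed.

Lemma eG : logn p #|G| = 7. Proof. by rewrite oG pfactorK. Qed.
Lemma eM : logn p #|G^`(1)| = 5. Proof. by rewrite oM pfactorK. Qed.

Lemma Mne1 : G^`(1) != 1.
Proof. by rewrite -cardG_gt1 oM (ltn_exp2l 0). Qed.

Lemma ncyc : ~~ cyclic G.
Proof.
apply/negP => /cyclic_abelian /derG1P M1.
by move: Mne1; rewrite M1 eqxx.
Qed.

Lemma cMM x y : x \in G^`(1) -> y \in G^`(1) -> commute x y.
Proof. by move=> Mx My; apply: (centsP abM). Qed.

Lemma oMho : #|'Mho^1(G^`(1))| = p.
Proof.
have pM : p.-group G^`(1) := pgroupS sMG pG.
have := mul_card_Ohm_Mho_abelian 1 abM.
have oO : #|'Ohm_1(G^`(1))| = (p ^ 4)%N.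
  rewrite (card_pgroup (pgroupS (Ohm_sub 1 _) pM)).
  by rewrite -(rank_abelian_pgroup pM abM) rM.
rewrite oO oM => /eqP; rewrite (_ : (p ^ 5 = p ^ 4 * p)%N); last by rewrite -expnSr.
by rewrite eqn_pmul2l ?expn_gt0 ?p_gt0 // => /eqP.
Qed.

Lemma MhoZ : 'Mho^1(G^`(1)) \subset 'Z(G).
Proof.
have nsH : 'Mho^1(G^`(1)) <| G := char_normal_trans (Mho_char 1 _) nsMG.
have prH : prime #|'Mho^1(G^`(1))| by rewrite oMho.
apply: contraR (meet_center_nil nilG nsH _) => [nsub|].
  by rewrite prime_TIg ?eqxx.
by rewrite -cardG_gt1 oMho.
Qed.

Lemma expMZ m : m \in G^`(1) -> m ^+ p \in 'Z(G).
Proof.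
move=> Mm; apply: (subsetP MhoZ); rewrite -[p]expn1.
by apply: Mho_p_elt => //; apply: mem_p_elt (pgroupS sMG pG) Mm.
Qed.

Definition Kp := [set x in G^`(1) | x ^+ p == 1].
Lemma Kp_group : group_set Kp.
Proof.
apply/group_setP; split; first by rewrite inE group1 expg1n eqxx.
move=> x y; rewrite !inE => /andP[Mx /eqP x1] /andP[My /eqP y1].
rewrite groupM //= expgMn; [by rewrite x1 y1 mulg1 | exact: cMM].
Qed.
Canonical Kp_grp := Group Kp_group.

Lemma commMG_sub : [~: G^`(1), G] \subset G^`(1).
Proof. by rewrite commg_subl der_norm. Qed.

Lemma L3sub : 'L_3(G) \subset G^`(1).
Proof. exact: (@lcn_sub_leq _ 3 2 G isT). Qed.

Lemma L3Kp : 'L_3(G) \subset Kp.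
Proof.
rewrite /= gen_subG; apply/subsetP => _ /imset2P[m g Mm Gg ->].
have Mc : [~ m, g] \in G^`(1) by apply: (subsetP commMG_sub); rewrite mem_commg.
rewrite inE Mc /= -commXg; last by apply: cMM.
apply/commgP; have /centerP[_ cZ] := expMZ Mm; exact: cZ.
Qed.

Lemma L3exp t : t \in 'L_3(G) -> t ^+ p = 1.
Proof. by move/(subsetP L3Kp); rewrite inE => /andP[_ /eqP]. Qed.

Lemma Gne1 : G != 1 :> {set gT}.
Proof. by rewrite -cardG_gt1 oG (ltn_exp2l 0). Qed.

Lemma PhiM : 'Phi(G) = G^`(1).
Proof.
have sMP : G^`(1) \subset 'Phi(G) by rewrite (Phi_joing pG) joing_subl.
have prP := Phi_proper Gne1.
apply/eqP; apply: contraR ncyc => neq.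
have prMP : G^`(1) \proper 'Phi(G) by rewrite properEneq eq_sym neq sMP.
have e1 := lt_e (Phi_sub G) prMP; have e2 := lt_e (subxx G) prP.
rewrite eM in e1; rewrite eG in e2.
have eP : logn p #|'Phi(G)%G| = 6 by lia.
apply: Phi_quotient_cyclic; apply: prime_cyclic.
rewrite card_quotient ?normal_norm ?Phi_normal //.
have := Lagrange (Phi_sub G); rewrite (cardS (Phi_sub G)) eP oG.
rewrite (_ : (p ^ 7 = p ^ 6 * p)%N); last by rewrite -expnSr.
by move/eqP; rewrite eqn_pmul2l ?expn_gt0 ?p_gt0 // => /eqP ->.
Qed.

Lemma expGM g : g \in G -> g ^+ p \in G^`(1).
Proof.
move=> Gg; rewrite -PhiM (Phi_joing pG); apply: (subsetP (joing_subr _ _)).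
by rewrite -[p]expn1; apply: Mho_p_elt => //; apply: mem_p_elt pG Gg.
Qed.

Lemma jne a : a \in G -> <[a]> <*> G^`(1) \proper G.
Proof.
move=> Ga; rewrite properEneq join_subG cycle_subG Ga sMG !andbT.
apply/eqP => eqG; move/negP: ncyc; apply.
have : ('Phi(G) <*> <[a]>) = G by rewrite PhiM joingC.
by move/Phi_nongen; rewrite genGid => <-; apply: cycle_cyclic.
Qed.

Lemma MproperG : G^`(1) \proper G.
Proof. by rewrite properEcard sMG oM oG ltn_exp2l. Qed.

Section AB.
Variables a b : gT.
Hypotheses (Ga : a \in G) (naM : a \notin G^`(1)) (Gb : b \in G)
  (nbA : b \notin <[a]> <*> G^`(1)).

Lemma eA : logn p #|(<[a]> <*> G^`(1))%G| = 6.
Proof.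
have prMA : G^`(1) \proper <[a]> <*> G^`(1).
  apply/properP; split; first exact: joing_subr.
  by exists a => //; apply: (subsetP (joing_subl _ _)); apply: cycle_id.
have e1 := lt_e (proper_sub (jne Ga)) prMA; have e2 := lt_e (subxx G) (jne Ga).
rewrite eM in e1; rewrite eG in e2; lia.
Qed.

Lemma GENLEM (S : {group gT}) : G^`(1) \subset S -> a \in S -> b \in S -> G \subset S.
Proof.
move=> sMS aS bS.
have sAS : <[a]> <*> G^`(1) \subset S :&: G.
  by rewrite join_subG cycle_subG !inE aS Ga subsetI sMS sMG.
have prAS : <[a]> <*> G^`(1) \proper (S :&: G)%G.
  by apply/properP; split => //; exists b => //; rewrite !inE bS Gb.
have e1 := lt_e (subsetIr S G) prAS; rewrite eA in e1.
have := eq_e (subxx G) (subsetIr S G); rewrite eG => /(_ e1) <-.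
exact: subsetIl.
Qed.

Lemma GENSET (P : pred gT) :
  (forall x y, x \in G -> y \in G -> P x -> P y -> P (x * y)) ->
  {in G^`(1), forall m, P m} -> P a -> P b -> {in G, forall g, P g}.
Proof.
move=> PM PMM Pa Pb.
have gS : group_set [set g in G | P g].
  apply/group_setP; split; first by rewrite inE group1 PMM.
  by move=> x y; rewrite !inE => /andP[Gx Px] /andP[Gy Py]; rewrite groupM ?PM.
have sMS : G^`(1) \subset Group gS.
  by apply/subsetP => m Mm; rewrite inE (subsetP sMG) ?PMM.
have := GENLEM sMS; rewrite !inE Ga Gb Pa Pb => /(_ isT isT) sGS g Gg.
by have := subsetP sGS g Gg; rewrite inE => /andP[].
Qed.



Definition c := [~ a, b].

Lemma Mc : c \in G^`(1).
Proof. by rewrite derg1 mem_commg. Qed.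

Lemma NB k (N : {group gT}) :
  'L_k.+2(G) \subset N -> N \subset 'L_k.+1(G) -> G \subset 'N(N).
Proof.
move=> sLN sNL; rewrite -commg_subr commGC.
by apply: subset_trans sLN; rewrite lcnSn commSg.
Qed.

Lemma MsubN0 : G^`(1) \subset <[c]> <*> 'L_3(G).
Proof.
set N0 := (<[c]> <*> 'L_3(G))%G.
have nN0 : G \subset 'N(N0).
  apply: (NB (k := 1)); first exact: joing_subr.
  by rewrite join_subG cycle_subG Mc L3sub.
have L3N0 : 'L_3(G) \subset N0 by exact: joing_subr.
have cN0 : c \in N0 by apply: (subsetP (joing_subl _ _)); apply: cycle_id.
have mN0 m g : m \in G^`(1) -> g \in G -> [~ m, g] \in N0.
  move=> Mm Gg; apply: (subsetP L3N0); exact: mem_commg.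
have C1 x : x \in G -> x \in pred2 a b -> {in G, forall h, [~ x, h] \in N0}.
  move=> Gx xab; apply: (GENSET (P := fun h => [~ x, h] \in N0)).
  - move=> y z Gy Gz Py Pz; rewrite commgMJ groupM // memJ_norm //.
    exact: (subsetP nN0).
  - by move=> m Mm; rewrite -invgR groupV mN0.
  - by case/pred2P: xab => ->; rewrite ?commgg ?group1 // -invgR groupV.
  - by case/pred2P: xab => ->; rewrite ?commgg ?group1 // -invgR groupV.
have C2 h : h \in G -> {in G, forall g, [~ g, h] \in N0}.
  move=> Gh; apply: (GENSET (P := fun g => [~ g, h] \in N0)).
  - move=> y z Gy Gz Py Pz; rewrite commMgJ groupM // memJ_norm //.
    exact: (subsetP nN0).
  - by move=> m Mm; rewrite mN0.
  - by apply: C1; rewrite ?inE ?eqxx.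
  - by apply: C1; rewrite ?inE ?eqxx ?orbT.
rewrite derg1 gen_subG; apply/subsetP => _ /imset2P[g h Gg Gh ->].
exact: C2.
Qed.

Lemma zne1 : c ^+ p != 1.
Proof.
apply/negP => /eqP z1.
have sMK : G^`(1) \subset Kp.
  apply: subset_trans MsubN0 _.
  by rewrite join_subG cycle_subG inE Mc z1 eqxx L3Kp.
have : 'Mho^1(G^`(1)) \subset [1].
  rewrite (MhoEabelian _ (pgroupS sMG pG) abM).
  apply/subsetP => _ /imsetP[x Mx ->]; rewrite expn1 inE.
  by have := subsetP sMK x Mx; rewrite inE => /andP[_].
rewrite subG1 => /eqP M1; have := oMho; rewrite M1 cards1 => p1.
by move: p_gt1; rewrite -p1.
Qed.

Lemma zZ : c ^+ p \in 'Z(G).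
Proof. exact: expMZ Mc. Qed.

Section HL.
Hypothesis HL : 'L_p.+1(G) = 1.

Lemma hallab : [~ a ^+ p, b] = c ^+ p.
Proof. exact: (hall abM pr_p Ga Gb HL L3exp). Qed.

Lemma hallba : [~ b ^+ p, a] = (c ^+ p)^-1.
Proof. by rewrite (hall abM pr_p Gb Ga HL L3exp) -invgR expgVn. Qed.

Lemma zL3 : c ^+ p \in 'L_3(G).
Proof. by rewrite -hallab; apply: mem_commg => //; apply: expGM. Qed.

End HL.

Lemma Kg_group (N : {group gT}) g : g \in G ->
  group_set [set t in G^`(1) | [~ t, g] \in N].
Proof.
move=> Gg; apply/group_setP; split; first by rewrite inE group1 comm1g group1.
move=> x y; rewrite !inE => /andP[Mx Nx] /andP[My Ny].
rewrite groupM //= commMgJ groupM //.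
suff -> : [~ x, g] ^ y = [~ x, g] by [].
apply/conjg_fixP/commgP; apply: cMM => //.
by apply: (subsetP commMG_sub); rewrite mem_commg.
Qed.

Definition KaG (N : {group gT}) := Group (Kg_group N Ga).
Definition KbG (N : {group gT}) := Group (Kg_group N Gb).
Definition Kab (N : {group gT}) := (KaG N :&: KbG N)%G.

Lemma KabP (N : {group gT}) t :
  reflect [/\ t \in G^`(1), [~ t, a] \in N & [~ t, b] \in N] (t \in Kab N).
Proof.
rewrite !inE; apply: (iffP idP).
  by case/andP => /andP[-> ->] /andP[_ ->].
by case=> -> -> ->.
Qed.

Lemma KabM (N : {group gT}) : Kab N \subset G^`(1).
Proof. by apply/subsetP => t /KabP[]. Qed.

Lemma GEN k (N : {group gT}) : G \subset 'N(N) -> 'L_k.+4(G) \subset N ->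
  'L_k.+2(G) \subset Kab N <*> 'L_k.+3(G) -> 'L_k.+3(G) \subset N.
Proof.
move=> nNG sLN sLK.
have sLM : 'L_k.+2(G) \subset G^`(1) by apply: (@lcn_sub_leq _ k.+2 2).
have nLK : Kab N \subset 'N('L_k.+3(G)).
  exact: subset_trans (KabM N) (subset_trans sMG (lcn_norm _ _)).
rewrite norm_joinEl // in sLK.
have Hx x : x \in pred2 a b -> forall t, t \in 'L_k.+2(G) -> [~ t, x] \in N.
  move=> xab t Lt; have /mulsgP[s r Ks Lr ->] := subsetP sLK t Lt.
  have Gr : r \in G := subsetP (lcn_sub k.+3 G) r Lr.
  have Gx : x \in G by case/pred2P: xab => ->.
  rewrite commMgJ groupM //.
    rewrite memJ_norm ?(subsetP nNG) //.
    by case/KabP: Ks => _ sa sb; case/pred2P: xab => ->.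
  have : [~ r, x] \in 'L_k.+4(G) by rewrite lcnSn mem_commg.
  exact: (subsetP sLN).
have P g : g \in G -> [forall (t | t \in 'L_k.+2(G)), [~ t, g] \in N].
  apply: (GENSET (P := fun g => [forall (t | t \in 'L_k.+2(G)), [~ t, g] \in N])).
  - move=> y z Gy Gz /forall_inP Py /forall_inP Pz; apply/forall_inP => t Lt.
    rewrite commgMJ groupM ?Pz // memJ_norm ?Py //; exact: (subsetP nNG).
  - move=> m Mm; apply/forall_inP => t Lt.
    suff -> : [~ t, m] = 1 by [].
    by apply/eqP/commgP; apply: cMM => //; apply: (subsetP sLM).
  - by apply/forall_inP; apply: Hx; rewrite inE eqxx.
  - by apply/forall_inP; apply: Hx; rewrite inE eqxx orbT.
rewrite lcnSn gen_subG; apply/subsetP => _ /imset2P[t g Lt Gg ->].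
exact: (forall_inP (P g Gg)).
Qed.



Lemma card_join (x : gT) (H : {group gT}) : x \in 'N(H) -> x ^+ p \in H ->
  #|<[x]> <*> H| <= p * #|H|.
Proof.
move=> nHx xpH; rewrite norm_joinEl ?cycle_subG //.
have := mul_cardG <[x]> H; rewrite -orderE => E.
set I := <[x]> :&: H in E.
have sI : <[x ^+ p]> \subset I by rewrite subsetI cycleX cycle_subG.
have le1 : #[x ^+ p] <= #|I| by rewrite orderE; apply: subset_leq_card.
have le2 : #[x] <= p * #[x ^+ p].
  rewrite orderXgcd; set g := gcdn _ _.
  have gp : g <= p by apply: dvdn_leq => //; apply: dvdn_gcdr.
  rewrite -{1}(divnK (dvdn_gcdl #[x] p)) -/g mulnC.
  by apply: leq_mul.
have I0 : 0 < #|I| by apply/card_gt0P; exists 1; rewrite inE !group1.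
rewrite -(leq_pmul2r I0) -E mulnAC leq_pmul2r ?cardG_gt0 //.
apply: leq_trans le2 _; rewrite leq_pmul2l //.
Qed.

Lemma cZ w : w \in 'Z(G) -> forall g, g \in G -> [~ w, g] = 1.
Proof. by move=> /centerP[_ cw] g Gg; apply/eqP/commgP; apply: cw. Qed.

Lemma lcnG k : 'L_k(G) \subset G. Proof. exact: lcn_sub. Qed.

Lemma eL k : #|'L_k(G)| = (p ^ logn p #|'L_k(G)|)%N.
Proof. exact: (cardS (lcn_sub k G)). Qed.

Lemma comm_pow_self (x : gT) : [~ x ^+ p, x] = 1.
Proof. by apply/eqP/commgP; apply: commute_sym; apply: commuteX; apply: commute_refl. Qed.

Lemma zcent : G \subset 'N(<[c ^+ p]>).
Proof.
have : <[c ^+ p]> <| G by apply: sub_center_normal; rewrite cycle_subG zZ.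
by case/andP.
Qed.

Lemma ord_le x (H : {group gT}) : x ^+ p = 1 -> H \subset <[x]> -> #|H| <= p.
Proof.
move=> x1 sH; apply: leq_trans (subset_leq_card sH) _.
by rewrite -orderE dvdn_leq // order_dvdn x1.
Qed.

Section P1.
Hypothesis L5 : 'L_5(G) = 1.

Let HL : 'L_p.+1(G) = 1.
Proof. by apply/eqP; rewrite -subG1 -L5; apply: lcn_sub_leq; apply: leqW. Qed.

Let z := c ^+ p.
Let zL3' : z \in 'L_3(G). Proof. exact: zL3 HL. Qed.
Let zp : z ^+ p = 1. Proof. exact: L3exp. Qed.
Let zG : z \in G. Proof. exact: (subsetP (lcnG 3)). Qed.

Let e3 : 4 <= logn p #|'L_3(G)|.
Proof.
have le : #|G^`(1)| <= p * #|'L_3(G)|.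
  apply: leq_trans (subset_leq_card MsubN0) _; apply: card_join.
    by apply: (subsetP (lcn_norm 3 G)); apply: (subsetP sMG); apply: Mc.
  exact: zL3'.
by move: le; rewrite oM (eL 3) -expnS leq_exp2l // pfactorK.
Qed.

Let e34 : logn p #|'L_3(G)| <= (logn p #|'L_4(G)|).+2.
Proof.
set ca := [~ c, a]; set cb := [~ c, b].
have caL : ca \in 'L_3(G) by rewrite mem_commg ?Mc.
have cbL : cb \in 'L_3(G) by rewrite mem_commg ?Mc.
set N1' := (<[cb]> <*> 'L_4(G))%G; set N1 := (<[ca]> <*> N1')%G.
have nN1' : G \subset 'N(N1').
  apply: (NB (k := 2%N)); first exact: joing_subr.
  by rewrite join_subG cycle_subG cbL lcn_subS.
have nN1 : G \subset 'N(N1).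
  apply: (NB (k := 2%N)).
    exact: subset_trans (joing_subr _ _) (joing_subr _ _).
  by rewrite join_subG cycle_subG caL join_subG cycle_subG cbL lcn_subS.
have sL3 : 'L_3(G) \subset N1.
  apply: (GEN (k := 0%N)) => //.
    exact: subset_trans (joing_subr _ _) (joing_subr _ _).
  apply: subset_trans MsubN0 _; rewrite join_subG joing_subr andbT.
  rewrite cycle_subG; apply: (subsetP (joing_subl _ _)).
  apply/KabP; split; first exact: Mc.
    by apply: (subsetP (joing_subl _ _)); apply: cycle_id.
  by apply: (subsetP (joing_subr _ _)); apply: (subsetP (joing_subl _ _)); apply: cycle_id.
have le : #|'L_3(G)| <= p * (p * #|'L_4(G)|).
  apply: leq_trans (subset_leq_card sL3) _.
  apply: leq_trans (card_join _ _) _.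
  - by apply: (subsetP nN1'); apply: (subsetP (lcnG 3)).
  - by rewrite L3exp // group1.
  rewrite leq_pmul2l //; apply: card_join.
  - by apply: (subsetP (lcn_norm 4 G)); apply: (subsetP (lcnG 3)).
  - by rewrite L3exp // group1.
by move: le; rewrite (eL 3) (eL 4) -!expnS leq_exp2l // !pfactorK.
Qed.

Let e4 : 2 <= logn p #|'L_4(G)|.
Proof. by move: e3 e34; lia. Qed.

Let N2 := (<[z]> <*> 'L_4(G))%G.

Lemma LOC w : w \in G^`(1) -> [~ w, a] \in <[z]> -> [~ w, b] \in <[z]> ->
  ([~ w, a] != 1) || ([~ w, b] != 1) ->
  w \in 'L_3(G) /\ w \notin 'L_4(G).
Proof.
move=> Mw wa wb nt.
have Gw : w \in G := subsetP sMG w Mw.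
have n4 : w \notin 'L_4(G).
  apply: contraL nt => Lw.
  have : [~ w, a] \in 'L_5(G) by rewrite lcnSn mem_commg.
  have : [~ w, b] \in 'L_5(G) by rewrite lcnSn mem_commg.
  by rewrite L5 !inE => -> ->.
split => //; apply/negPn/negP => n3.
have nN2 : G \subset 'N(N2).
  apply: (NB (k := 2%N)); first exact: joing_subr.
  by rewrite join_subG cycle_subG zL3' lcn_subS.
have zN2 : <[z]> \subset N2 by exact: joing_subl.
have eqM : (<[w]> <*> 'L_3(G))%G :=: G^`(1)%G.
  apply: eq_e; first exact: sMG.
    by rewrite join_subG cycle_subG Mw L3sub.
  have pr : 'L_3(G) \proper (<[w]> <*> 'L_3(G))%G.
    apply/properP; split; first exact: joing_subr.
    by exists w => //; apply: (subsetP (joing_subl _ _)); apply: cycle_id.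
  have sG : (<[w]> <*> 'L_3(G))%G \subset G.
    by rewrite join_subG cycle_subG Gw lcnG.
  have := lt_e sG pr; rewrite eM => h; exact: leq_ltn_trans e3 h.
have sL3N2 : 'L_3(G) \subset N2.
  apply: (GEN (k := 0%N)) => //; first exact: joing_subr.
  apply: subset_trans (_ : _ \subset (<[w]> <*> 'L_3(G))%G) _.
    by rewrite eqM.
  rewrite join_subG joing_subr andbT cycle_subG.
  apply: (subsetP (joing_subl _ _)); apply/KabP; split => //.
    exact: (subsetP zN2).
  exact: (subsetP zN2).
have L41 : 'L_4(G) \subset [1 gT]%G.
  apply: (GEN (k := 1%N)); first by rewrite norm1 subsetT.
    by rewrite L5.
  apply: subset_trans sL3N2 _; rewrite join_subG joing_subr andbT cycle_subG.
  apply: (subsetP (joing_subl _ _)); apply/KabP; split.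
  - exact: (subsetP L3sub).
  - by rewrite (cZ zZ) // group1.
  - by rewrite (cZ zZ) // group1.
have le : #|'L_3(G)| <= p * #|'L_4(G)|.
  apply: leq_trans (subset_leq_card sL3N2) _; apply: card_join.
    exact: (subsetP (lcn_norm 4 G)).
  by rewrite zp group1.
have L4e : 'L_4(G) = 1 by apply/(@trivgP _ ('L_4(G))%G).
move: le e3; rewrite L4e cards1 muln1.
move=> h1 h2.
have : (p ^ logn p #|'L_3(G)| <= p ^ 1)%N by rewrite expn1 -eL.
rewrite leq_exp2l // => h3.
by have := leq_trans h2 h3.
Qed.

Lemma part1 : False.
Proof.
set u := a ^+ p; set v := b ^+ p.
have Mu : u \in G^`(1) := expGM Ga.
have Mv : v \in G^`(1) := expGM Gb.
have ua : [~ u, a] = 1 := comm_pow_self a.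
have ub : [~ u, b] = z := hallab HL.
have vb : [~ v, b] = 1 := comm_pow_self b.
have va : [~ v, a] = z^-1 := hallba HL.
have zn : z != 1 := zne1.
have [u3 u4] : u \in 'L_3(G) /\ u \notin 'L_4(G).
  apply: LOC => //; first by rewrite ua group1.
    by rewrite ub cycle_id.
  by rewrite ub zn orbT.
have [v3 v4] : v \in 'L_3(G) /\ v \notin 'L_4(G).
  apply: LOC => //; first by rewrite va groupV cycle_id.
    by rewrite vb group1.
  by rewrite va invg_eq1 zn.
have GN4 t : t \in 'L_4(G) -> t \in G^`(1).
  by move=> Lt; apply: (subsetP (@lcn_sub_leq _ 4 2 G isT)).
case: (boolP (v \in <[u]> <*> 'L_4(G))) => [vJ | nvJ].
  have sKa : <[u]> <*> 'L_4(G) \subset KaG 1%G.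
    rewrite join_subG cycle_subG inE Mu ua group1 /=.
    apply/subsetP => t Lt; rewrite inE GN4 //=.
    have : [~ t, a] \in 'L_5(G) by rewrite lcnSn mem_commg.
    by rewrite L5.
  have := subsetP sKa v vJ; rewrite inE va => /andP[_].
  by rewrite inE invg_eq1 (negPf zn).
set J1 := (<[u]> <*> 'L_4(G))%G; set J := (<[v]> <*> J1)%G.
have pr1 : 'L_4(G) \proper J1.
  apply/properP; split; first exact: joing_subr.
  by exists u => //; apply: (subsetP (joing_subl _ _)); apply: cycle_id.
have pr2 : J1 \proper J.
  apply/properP; split; first exact: joing_subr.
  by exists v => //; apply: (subsetP (joing_subl _ _)); apply: cycle_id.
have sJ : J \subset 'L_3(G).
  by rewrite join_subG cycle_subG v3 join_subG cycle_subG u3 lcn_subS.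
have sJG : J \subset G := subset_trans sJ (lcnG 3).
have ea := lt_e (subset_trans (proper_sub pr2) sJG) pr1.
have eb := lt_e sJG pr2.
have eqJ : J :=: 'L_3(G)%G.
  apply: eq_e => //; first exact: lcnG.
  apply: leq_trans e34 _; apply: leq_trans eb; exact: ea.
have sL4 : 'L_4(G) \subset <[z]>%G.
  apply: (GEN (k := 1%N)); first exact: zcent.
    by rewrite L5 sub1G.
  apply: subset_trans (_ : _ \subset J) _; first by rewrite eqJ.
  have Kz w : w \in G^`(1) -> [~ w, a] \in <[z]> -> [~ w, b] \in <[z]> ->
      <[w]> \subset Kab <[z]>%G <*> 'L_4(G).
    move=> Mw wa wb; rewrite cycle_subG; apply: (subsetP (joing_subl _ _)).
    by apply/KabP.
  rewrite join_subG Kz //; last by rewrite vb group1.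
    rewrite join_subG Kz ?joing_subr //; first by rewrite ua group1.
    by rewrite ub cycle_id.
  by rewrite va groupV cycle_id.
have h := ord_le zp sL4.
have : (p ^ logn p #|'L_4(G)| <= p ^ 1)%N by rewrite expn1 -eL.
by rewrite leq_exp2l // => h3; have := leq_trans e4 h3.
Qed.
End P1.

Section P2.
Hypotheses (p7 : 7 <= p) (L6 : 'L_6(G) != 1).

Let ntL k : k <= 6 -> 'L_k(G) != 1.
Proof.
move=> lek; apply: contraNneq L6 => Lk1; apply/eqP.
by apply/(@trivgP _ ('L_6(G))%G); rewrite -Lk1 lcn_sub_leq.
Qed.

Let prL k : k < 6 -> 'L_k.+2(G) \proper 'L_k.+1(G).
Proof.
move=> lek; have ntk : 'L_k.+1(G) != 1 := ntL lek.
have nk : G \subset 'N_G('L_k.+1(G)) by rewrite subsetI subxx lcn_norm.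
exact: (nil_comm_properl nilG (lcnG k.+1) ntk nk).
Qed.

Definition EL k := logn p #|'L_k(G)|.

Let STR k : k < 6 -> EL k.+2 < EL k.+1.
Proof. by move=> lek; apply: (lt_e (lcnG k.+1) (prL lek)). Qed.

Let e6 : 0 < EL 6.
Proof.
have := ntL (leqnn 6); rewrite -cardG_gt1 (eL 6) /EL.
by case: (logn _ _).
Qed.

Let eLs : [/\ EL 3 = 4%N, EL 4 = 3%N, EL 5 = 2%N, EL 6 = 1%N & EL 7 = 0%N].
Proof.
have h2 : EL 2 = 5%N by exact: eM.
have := STR (k := 1%N) isT; have := STR (k := 2%N) isT; have := STR (k := 3%N) isT.
have := STR (k := 4%N) isT; have := STR (k := 5%N) isT.
move=> h7 h6 h5 h4 h3; move: h2 e6 => h2 h1.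
split; lia.
Qed.

Let L7 : 'L_7(G) = 1.
Proof.
case: eLs => _ _ _ _ e7; apply/eqP.
by rewrite trivg_card1 (eL 7) -/(EL 7) e7.
Qed.

Let HL : 'L_p.+1(G) = 1.
Proof. by apply/eqP; rewrite -subG1 -L7; apply: lcn_sub_leq; apply: leqW. Qed.

Let eidx k : k <= 3 -> EL k.+2 <= (EL k.+3).+1.
Proof.
have e2 : EL 2 = 5%N := eM.
case: eLs => e3 e4 e5 e6' e7.
by case: k => [|[|[|[|]]]] // _; rewrite ?e2 ?e3 ?e4 ?e5 ?e6'.
Qed.

Lemma STEP k w : k <= 3 -> w \in 'L_k.+2(G) -> [~ w, a] \in 'L_k.+4(G) ->
  [~ w, b] \in 'L_k.+4(G) -> w \in 'L_k.+3(G).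
Proof.
move=> lek Lw wa wb; apply/negPn/negP => nw.
have Mw : w \in G^`(1) by apply: (subsetP (@lcn_sub_leq _ k.+2 2 G isT)).
have Gw : w \in G := subsetP (lcnG _) w Lw.
have eqL : (<[w]> <*> 'L_k.+3(G))%G :=: 'L_k.+2(G)%G.
  apply: eq_e; first exact: lcnG.
    by rewrite join_subG cycle_subG Lw lcn_subS.
  have pr : 'L_k.+3(G) \proper (<[w]> <*> 'L_k.+3(G))%G.
    apply/properP; split; first exact: joing_subr.
    by exists w => //; apply: (subsetP (joing_subl _ _)); apply: cycle_id.
  have sG : (<[w]> <*> 'L_k.+3(G))%G \subset G.
    by rewrite join_subG cycle_subG Gw lcnG.
  by have := lt_e sG pr; apply: leq_trans; apply: eidx.
have : 'L_k.+3(G) \subset 'L_k.+4(G)%G.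
  apply: (GEN (k := k)); first exact: lcn_norm.
    exact: subxx.
  apply: subset_trans (_ : _ \subset (<[w]> <*> 'L_k.+3(G))%G) _.
    by rewrite eqL.
  rewrite join_subG joing_subr andbT cycle_subG.
  by apply: (subsetP (joing_subl _ _)); apply/KabP.
by apply/negP; apply: proper_subn; apply: (prL (k := k.+2)); rewrite ltnS.
Qed.

Lemma part2 : False.
Proof.
set z := c ^+ p.
have zn : z != 1 := zne1.
have zc g : g \in G -> [~ z, g] = 1 by move=> Gg; apply: cZ zZ g Gg.
have z3 : z \in 'L_3(G) := zL3 HL.
have z4 : z \in 'L_4(G) by apply: (STEP (k := 1%N)); rewrite ?zc ?group1.
have z5 : z \in 'L_5(G) by apply: (STEP (k := 2%N)); rewrite ?zc ?group1.
have z6 : z \in 'L_6(G) by apply: (STEP (k := 3%N)); rewrite ?zc ?group1.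
have zk k : k <= 6 -> z \in 'L_k(G).
  by move=> lek; apply: (subsetP (lcn_sub_leq G lek)).
set u := a ^+ p; set v := b ^+ p.
have Mu : u \in G^`(1) := expGM Ga.
have Mv : v \in G^`(1) := expGM Gb.
have ua : [~ u, a] = 1 := comm_pow_self a.
have ub : [~ u, b] = z := hallab HL.
have vb : [~ v, b] = 1 := comm_pow_self b.
have va : [~ v, a] = z^-1 := hallba HL.
have push w : w \in G^`(1) -> [~ w, a] \in 'L_6(G) -> [~ w, b] \in 'L_6(G) ->
    w \in 'L_5(G).
  move=> Mw wa wb.
  have sub k : k <= 2 -> 'L_6(G) \subset 'L_k.+4(G).
    by move=> lek; apply: lcn_sub_leq; rewrite !ltnS.
  have w3 : w \in 'L_3(G).
    by apply: (STEP (k := 0%N)) => //; apply: (subsetP (sub 0%N isT)).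
  have w4 : w \in 'L_4(G).
    by apply: (STEP (k := 1%N)) => //; apply: (subsetP (sub 1%N isT)).
  by apply: (STEP (k := 2%N)) => //; apply: (subsetP (sub 2%N isT)).
have u5 : u \in 'L_5(G) by apply: push; rewrite ?ua ?ub ?group1.
have v5 : v \in 'L_5(G) by apply: push; rewrite ?va ?vb ?groupV ?group1.
have u6 : u \notin 'L_6(G).
  apply: contraNN zn => Lu; rewrite -ub.
  have : [~ u, b] \in 'L_7(G) by rewrite lcnSn mem_commg.
  by rewrite L7 inE.
have eqL : (<[u]> <*> 'L_6(G))%G :=: 'L_5(G)%G.
  apply: eq_e; first exact: lcnG.
    by rewrite join_subG cycle_subG u5 lcn_subS.
  have pr : 'L_6(G) \proper (<[u]> <*> 'L_6(G))%G.
    apply/properP; split; first exact: joing_subr.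
    by exists u => //; apply: (subsetP (joing_subl _ _)); apply: cycle_id.
  have sG : (<[u]> <*> 'L_6(G))%G \subset G.
    by rewrite join_subG cycle_subG (subsetP sMG) // lcnG.
  by have := lt_e sG pr; apply: leq_trans; apply: (eidx (k := 3%N)).
have sKa : 'L_5(G) \subset KaG 1%G.
  apply: subset_trans (_ : _ \subset (<[u]> <*> 'L_6(G))%G) _.
    by rewrite eqL.
  rewrite join_subG cycle_subG inE Mu ua group1 /=.
  apply/subsetP => t Lt; rewrite inE.
  rewrite (subsetP (@lcn_sub_leq _ 6 2 G isT)) //=.
  have : [~ t, a] \in 'L_7(G) by rewrite lcnSn mem_commg.
  by rewrite L7.
have := subsetP sKa v v5; rewrite inE va => /andP[_].
by rewrite inE invg_eq1 (negPf zn).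
Qed.

End P2.
End AB.
End Main.

Unset Implicit Arguments.

Theorem lemma3p2 (p : nat) (gT : finGroupType) (G : {group gT}) :
  prime p -> 5 <= p -> #|G| = (p ^ 7)%N ->
  abelian (G^`(1)) -> #|G^`(1)| = (p ^ 5)%N -> dgen (G^`(1)) = 4 ->
  5 <= nil_class G /\ (7 <= p -> nil_class G = 5).
Proof.
move=> pr_p p5 oG abM oM dM.
have rM : 'r(G^`(1)) = 4.
  by rewrite -grank_abelian //; exact: dM.
have [_ [a Ga naM]] := properP (MproperG pr_p oG oM).
have [_ [b Gb nbA]] := properP (jne pr_p p5 oG abM oM rM Ga).
have nilG := nilG pr_p oG.
have part1' : 5 <= nil_class G.
  rewrite leqNgt; apply/negP => lt5.
  apply: (part1 pr_p p5 oG abM oM rM Ga naM Gb nbA).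
  by apply/(lcn_nil_classP 4 nilG).
split => // p7.
apply/eqP; rewrite eqn_leq part1' andbT.
apply/(lcn_nil_classP 5 nilG).
case: (eqVneq ('L_6(G)) 1) => // ntL.
by case: (part2 pr_p p5 oG abM oM rM Ga naM Gb nbA p7 ntL).
Qed.
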